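(* Let $W$ be a nonempty closed subset of $\mathbb{R}$ and let $\alpha,\beta,z\in\mathrm{Aut}(W)$. Suppose $\mathrm{Fix}_W(z)=\emptyset$ and $z$ commutes with both $\alpha$ and $\beta$. If $\mathrm{Fix}_W(\alpha)\ne\emptyset\ne\mathrm{Fix}_W(\beta)$ and $\mathrm{Fix}_W(\alpha)\cap\mathrm{Fix}_W(\beta)=\emptyset$, then $\langle\alpha,\beta\rangle$ contains a nonabelian free subgroup.
   Context: For a totally ordered set $X$ (here $W\subseteq\mathbb{R}$ with the induced order), $\mathrm{Aut}(X)$ is the group of order preserving bijections $X\to X$. For a group $G$ acting on $Y$ and $H\subseteq G$, $\mathrm{Fix}_Y(H)=\{y\in Y: hy=y\ \forall h\in H\}$, and $\mathrm{Fix}_Y(g)=\mathrm{Fix}_Y(\{g\})$. *)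

(* Defs.v *)
From Stdlib Require Import Reals Rtopology List Bool.
Open Scope R_scope.

Definition Wt (W : R -> Prop) : Type := {x : R | W x}.

Definition is_aut (W : R -> Prop) (f : Wt W -> Wt W) : Prop :=
  (exists g : Wt W -> Wt W, (forall x, g (f x) = x) /\ (forall x, f (g x) = x)) /\
  (forall x y : Wt W, proj1_sig x < proj1_sig y -> proj1_sig (f x) < proj1_sig (f y)).

Definition Fix (W : R -> Prop) (f : Wt W -> Wt W) : Wt W -> Prop := fun x => f x = x.

Inductive gen2 (W : R -> Prop) (a b : Wt W -> Wt W) : (Wt W -> Wt W) -> Prop :=
| gen2_a : gen2 W a b a
| gen2_b : gen2 W a b b
| gen2_id : gen2 W a b (fun x => x)
| gen2_comp : forall f g, gen2 W a b f -> gen2 W a b g -> gen2 W a b (fun x => f (g x))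
| gen2_inv : forall f f', gen2 W a b f ->
    (forall x, f' (f x) = x) -> (forall x, f (f' x) = x) -> gen2 W a b f'.

(* Words in the free group on two letters: a letter is (which generator, inverted?). *)
Definition letter := (bool * bool)%type.

Fixpoint reduced (w : list letter) : Prop :=
  match w with
  | nil => True
  | l :: w' =>
      match w' with
      | nil => True
      | l' :: _ => ~ (fst l = fst l' /\ snd l = negb (snd l')) /\ reduced w'
      end
  end.

Definition eval_letter {T : Type} (f f' g g' : T -> T) (l : letter) : T -> T :=
  match l with
  | (false, false) => f
  | (false, true) => f'
  | (true, false) => g
  | (true, true) => g'
  end.

Fixpoint eval_word {T : Type} (f f' g g' : T -> T) (w : list letter) : T -> T :=
  match w with
  | nil => fun x => x
  | l :: w' => fun x => eval_letter f f' g g' l (eval_word f f' g g' w' x)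
  end.

Definition contains_nonabelian_free (W : R -> Prop) (H : (Wt W -> Wt W) -> Prop) : Prop :=
  exists f f' g g' : Wt W -> Wt W,
    H f /\ H g /\
    (forall x, f' (f x) = x) /\ (forall x, f (f' x) = x) /\
    (forall x, g' (g x) = x) /\ (forall x, g (g' x) = x) /\
    (forall w : list letter, w <> nil -> reduced w ->
       exists x, eval_word f f' g g' w x <> x).

(* Main.v *)
Require Import Defs.
From Stdlib Require Import Reals Rtopology List Bool Lra Lia ZArith Classical ClassicalEpsilon ProofIrrelevance.
Open Scope R_scope.


Fixpoint it {T : Type} (n : nat) (f : T -> T) (x : T) : T :=
  match n with O => x | S m => f (it m f x) end.

Record ord (T : Type) := mkord {
  ph : T -> R;
  ph_inj : forall x y, ph x = ph y -> x = y;
  sup_ex : forall S : T -> Prop, (exists x, S x) -> (exists M, forall x, S x -> ph x <= M) ->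
     exists s, (forall x, S x -> ph x <= ph s) /\
               (forall e, 0 < e -> exists x, S x /\ ph s - e < ph x);
  inf_ex : forall S : T -> Prop, (exists x, S x) -> (exists M, forall x, S x -> M <= ph x) ->
     exists s, (forall x, S x -> ph s <= ph x) /\
               (forall e, 0 < e -> exists x, S x /\ ph x < ph s + e)
}.
Arguments ph {T} o x.
Arguments ph_inj {T} o x y.
Arguments sup_ex {T} o S.
Arguments inf_ex {T} o S.

Definition dual {T} (o : ord T) : ord T.
Proof.
refine (mkord T (fun x => - ph o x) _ _ _).
- intros x y H. apply (ph_inj o). lra.
- intros S Hne [M HM]. destruct (inf_ex o S Hne) as [s [H1 H2]].
  { exists (-M). intros x Sx; specialize (HM x Sx); lra. }
  exists s. split. intros x Sx; specialize (H1 x Sx); lra.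
  intros e He; destruct (H2 e He) as [x [Sx Hx]]; exists x; split; auto; lra.
- intros S Hne [M HM]. destruct (sup_ex o S Hne) as [s [H1 H2]].
  { exists (-M). intros x Sx; specialize (HM x Sx); lra. }
  exists s. split. intros x Sx; specialize (H1 x Sx); lra.
  intros e He; destruct (H2 e He) as [x [Sx Hx]]; exists x; split; auto; lra.
Defined.

Lemma ph_dual {T} (o : ord T) x : ph (dual o) x = - ph o x.
Proof. reflexivity. Qed.

Definition incr {T} (o : ord T) (h : T -> T) :=
  forall x y, ph o x < ph o y -> ph o (h x) < ph o (h y).
Definition inv {T} (h hi : T -> T) := (forall x, hi (h x) = x) /\ (forall x, h (hi x) = x).

Lemma incr_dual {T} (o : ord T) h : incr o h -> incr (dual o) h.
Proof. unfold incr; intros H x y; rewrite !ph_dual; intros; specialize (H y x); lra. Qed.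

Lemma incr_le {T} (o : ord T) h x y : incr o h -> ph o x <= ph o y -> ph o (h x) <= ph o (h y).
Proof.
  intros H Hxy. destruct (Rle_lt_or_eq_dec _ _ Hxy) as [Hl|He].
  - left; apply H; auto.
  - rewrite (ph_inj o x y He); lra.
Qed.

Lemma incr_rev {T} (o : ord T) h x y : incr o h -> ph o (h x) < ph o (h y) -> ph o x < ph o y.
Proof.
  intros H Hxy. destruct (Rlt_or_le (ph o x) (ph o y)) as [|Hle]; auto.
  apply (incr_le o h) in Hle; auto; lra.
Qed.

Lemma incr_rev_le {T} (o : ord T) h x y : incr o h -> ph o (h x) <= ph o (h y) -> ph o x <= ph o y.
Proof.
  intros H Hxy. destruct (Rlt_or_le (ph o y) (ph o x)) as [Hl|]; auto.
  apply H in Hl; lra.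
Qed.

Lemma inv_sym {T} (h hi : T -> T) : inv h hi -> inv hi h.
Proof. intros [a b]; split; auto. Qed.

Lemma incr_inv {T} (o : ord T) h hi : incr o h -> inv h hi -> incr o hi.
Proof.
  intros H [H1 H2] x y Hxy. apply (incr_rev o h); auto. rewrite !H2; auto.
Qed.

Lemma it_S {T} n (f : T -> T) x : it (S n) f x = f (it n f x).
Proof. reflexivity. Qed.

Lemma it_Sr {T} n (f : T -> T) x : it (S n) f x = it n f (f x).
Proof. induction n; simpl; auto. simpl in IHn; rewrite IHn; auto. Qed.

Lemma it_add {T} n m (f : T -> T) x : it (n + m) f x = it n f (it m f x).
Proof. induction n; simpl; auto. rewrite IHn; auto. Qed.

Lemma it_mul {T} n m (f : T -> T) x : it (n * m) f x = it n (it m f) x.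
Proof. induction n; simpl; auto. rewrite it_add, IHn; auto. Qed.

Lemma it_incr {T} (o : ord T) h n : incr o h -> incr o (it n h).
Proof. intros H; induction n; intros x y Hxy; simpl; auto. Qed.

Lemma it_inv {T} (h hi : T -> T) n : inv h hi -> inv (it n h) (it n hi).
Proof.
  intros [H1 H2]; split; induction n; intros x; auto.
  - change (it (S n) h x) with (h (it n h x)). rewrite it_Sr, H1. apply IHn.
  - change (it (S n) hi x) with (hi (it n hi x)). rewrite it_Sr, H2. apply IHn.
Qed.

Lemma it_comm {T} (h g : T -> T) n x : (forall y, h (g y) = g (h y)) -> it n h (g x) = g (it n h x).
Proof. intros H; induction n; simpl; auto. rewrite IHn; auto. Qed.

Lemma it_fix {T} (h : T -> T) n x : h x = x -> it n h x = x.
Proof. intros H; induction n; simpl; auto. rewrite IHn; auto. Qed.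

Lemma fix_inv {T} (h hi : T -> T) x : inv h hi -> h x = x -> hi x = x.
Proof. intros [H1 H2] Hx. rewrite <- Hx at 1. auto. Qed.

Lemma orbit_up {T} (o : ord T) h x n : incr o h -> ph o x < ph o (h x) ->
  ph o (it n h x) < ph o (it (S n) h x).
Proof. intros H Hx; induction n; simpl in *; auto. Qed.

Lemma orbit_mono {T} (o : ord T) h x n m : incr o h -> ph o x < ph o (h x) -> (n <= m)%nat ->
  ph o (it n h x) <= ph o (it m h x).
Proof.
  intros H Hx Hnm. induction Hnm; [lra|].
  pose proof (orbit_up o h x m H Hx). lra.
Qed.

Lemma orbit_limit {T} (o : ord T) h hi x : incr o h -> inv h hi -> ph o x < ph o (h x) ->
  (exists M, forall n, ph o (it n h x) <= M) ->
  exists s, h s = s /\ (forall n, ph o (it n h x) <= ph o s) /\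
   (forall e, 0 < e -> exists N, forall n, (N <= n)%nat -> ph o s - e < ph o (it n h x)).
Proof.
  intros Hh Hinv Hx [M HM].
  destruct (sup_ex o (fun y => exists n, y = it n h x)) as [s [Hs1 Hs2]].
  { exists x; exists O; auto. }
  { exists M; intros y [n ->]; auto. }
  assert (Hub : forall n, ph o (it n h x) <= ph o s) by (intros n; apply Hs1; eauto).
  assert (Hfix : h s = s).
  { apply (ph_inj o).
    destruct (Rtotal_order (ph o (h s)) (ph o s)) as [Hl|[He|Hg]]; auto.
    - exfalso. destruct (Hs2 (ph o s - ph o (h s))) as [y [[n ->] Hy]]; [lra|].
      pose proof (Hub (S n)). simpl in H.
      assert (ph o (h (it n h x)) <= ph o (h s)) by (apply incr_le; auto).
      pose proof (orbit_up o h x n Hh Hx). simpl in H1. lra.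
    - exfalso. destruct Hinv as [Hi1 Hi2].
      assert (Hhs : ph o (hi s) < ph o s).
      { apply (incr_rev o h); auto. rewrite Hi2. auto. }
      destruct (Hs2 (ph o s - ph o (hi s))) as [y [[n ->] Hy]]; [lra|].
      assert (ph o (hi s) < ph o (it n h x)) by lra.
      apply Hh in H. rewrite Hi2 in H. pose proof (Hub (S n)). simpl in H0. lra. }
  exists s; split; auto; split; auto.
  intros e He. destruct (Hs2 e He) as [y [[N ->] Hy]]. exists N; intros n Hn.
  pose proof (orbit_mono o h x N n Hh Hx Hn). lra.
Qed.

Lemma sup_fix {T} (o : ord T) h hi (S : T -> Prop) : incr o h -> inv h hi ->
  (forall x, S x -> h x = x) -> (exists x, S x) -> (exists M, forall x, S x -> ph o x <= M) ->
  exists s, h s = s /\ (forall x, S x -> ph o x <= ph o s) /\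
       (forall e, 0 < e -> exists x, S x /\ ph o s - e < ph o x).
Proof.
  intros Hh Hinv HS Hne Hb. destruct (sup_ex o S Hne Hb) as [s [Hs1 Hs2]].
  exists s; split; auto.
  assert (Hhi := incr_inv o h hi Hh Hinv).
  apply (ph_inj o).
  destruct (Rtotal_order (ph o (h s)) (ph o s)) as [Hl|[He|Hg]]; auto; exfalso.
  - destruct (Hs2 (ph o s - ph o (h s))) as [y [Sy Hy]]; [lra|].
    assert (ph o (h y) <= ph o (h s)) by (apply incr_le; auto).
    rewrite HS in H; auto. lra.
  - destruct Hinv as [Hi1 Hi2].
    assert (Hhs : ph o (hi s) < ph o s).
    { apply (incr_rev o h); auto. rewrite Hi2. auto. }
    destruct (Hs2 (ph o s - ph o (hi s))) as [y [Sy Hy]]; [lra|].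
    assert (ph o (hi y) <= ph o (hi s)) by (apply incr_le; auto; lra).
    rewrite (fix_inv h hi y (conj Hi1 Hi2) (HS y Sy)) in H. lra.
Qed.

Lemma fix_between {T} (o : ord T) h hi x y : incr o h -> inv h hi ->
  ph o x < ph o y -> ph o x < ph o (h x) -> ph o (h y) < ph o y ->
  exists s, h s = s /\ ph o x <= ph o s <= ph o y.
Proof.
  intros Hh Hinv Hxy Hx Hy.
  destruct (sup_ex o (fun t => ph o x <= ph o t <= ph o y /\ ph o t < ph o (h t))) as [s [Hs1 Hs2]].
  { exists x; lra. }
  { exists (ph o y); intros t Ht; lra. }
  assert (Hxs : ph o x <= ph o s) by (apply Hs1; lra).
  assert (Hsy : ph o s <= ph o y).
  { destruct (Rle_or_lt (ph o s) (ph o y)) as [|Hl]; auto.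
    destruct (Hs2 (ph o s - ph o y)) as [t [Ht Ht2]]; lra. }
  exists s. split; [|lra].
  apply (ph_inj o).
  destruct (Rtotal_order (ph o (h s)) (ph o s)) as [Hl|[He|Hg]]; auto; exfalso.
  - destruct (Hs2 (ph o s - ph o (h s))) as [t [Ht Ht2]]; [lra|].
    assert (ph o (h t) <= ph o (h s)) by (apply incr_le; auto; apply Hs1; auto).
    lra.
  -
    assert (Hsin : ph o x <= ph o s <= ph o y /\ ph o s < ph o (h s)) by lra.
    destruct (Rle_or_lt (ph o (h s)) (ph o y)) as [Hle|Hlt].
    + assert (ph o (h s) < ph o (h (h s))) by (apply Hh; auto).
      assert (ph o (h s) <= ph o s) by (apply Hs1; lra). lra.
    + assert (Hsy' : ph o s < ph o y).
      { destruct (Rle_lt_or_eq_dec _ _ Hsy); auto. rewrite (ph_inj o _ _ e) in Hg. lra. }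
      apply Hh in Hsy'. lra.
Qed.

Lemma fix_between' {T} (o : ord T) h hi x y : incr o h -> inv h hi ->
  ph o x < ph o y -> ph o (h x) < ph o x -> ph o y < ph o (h y) ->
  exists s, h s = s /\ ph o x <= ph o s <= ph o y.
Proof.
  intros Hh Hinv Hxy Hx Hy.
  assert (Hhi := incr_inv o h hi Hh Hinv). destruct Hinv as [Hi1 Hi2].
  destruct (fix_between o hi h x y Hhi (conj Hi2 Hi1) Hxy) as [s [Hs1 Hs2]].
  - apply (incr_rev o h); auto. rewrite Hi2; auto.
  - apply (incr_rev o h); auto. rewrite Hi2; auto.
  - exists s; split; auto. rewrite <- Hs1 at 1. auto.
Qed.


Lemma gap_up {T} (o : ord T) h hi lo up : incr o h -> inv h hi -> ph o lo <= ph o up ->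
  (forall t, ph o lo <= ph o t <= ph o up -> h t <> t) -> ph o lo < ph o (h lo) ->
  (exists a, h a = a /\ ph o up < ph o a) ->
  forall rho, 0 < rho -> exists N, forall n v, (N <= n)%nat -> ph o lo <= ph o v <= ph o up ->
    exists a, h a = a /\ Rabs (ph o (it n h v) - ph o a) < rho.
Proof.
  intros Hh Hinv Hlu Hnf Hlo [a [Ha Hua]] rho Hrho.
  destruct (orbit_limit o h hi lo Hh Hinv Hlo) as [s [Hs [Hs1 Hs2]]].
  { exists (ph o a). intros n. rewrite <- (it_fix h n a Ha). apply incr_le.
    apply it_incr; auto. lra. }
  assert (Hus : ph o up < ph o s).
  { destruct (Rlt_or_le (ph o up) (ph o s)) as [|Hle]; auto. exfalso.
    apply (Hnf s); auto. split; auto. pose proof (Hs1 O). simpl in H. auto. }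
  destruct (Hs2 rho Hrho) as [N HN]. exists N. intros n v Hn Hv.
  exists s; split; auto.
  assert (ph o (it n h lo) <= ph o (it n h v)) by (apply incr_le; [apply it_incr; auto| lra]).
  assert (ph o (it n h v) <= ph o (it n h s)) by (apply incr_le; [apply it_incr; auto| lra]).
  rewrite (it_fix h n s Hs) in H0. specialize (HN n Hn).
  apply Rabs_def1; lra.
Qed.

Lemma gap_gen {T} (o : ord T) h hi lo up : incr o h -> inv h hi -> ph o lo <= ph o up ->
  (forall t, ph o lo <= ph o t <= ph o up -> h t <> t) ->
  (exists a, h a = a /\ ph o up < ph o a) ->
  (exists a, h a = a /\ ph o a < ph o lo) ->
  forall rho, 0 < rho -> exists N, forall n v, (N <= n)%nat -> ph o lo <= ph o v <= ph o up ->
    exists a, h a = a /\ Rabs (ph o (it n h v) - ph o a) < rho.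
Proof.
  intros Hh Hinv Hlu Hnf Hab Hbe rho Hrho.
  destruct (Rtotal_order (ph o lo) (ph o (h lo))) as [Hl|[He|Hg]].
  - eapply gap_up; eauto.
  - exfalso. apply (Hnf lo). lra. apply (ph_inj o). auto.
  - assert (Hup : ph o (h up) < ph o up).
    { destruct (Rtotal_order (ph o (h up)) (ph o up)) as [|[He|Hg']]; auto; exfalso.
      - apply (Hnf up). lra. apply (ph_inj o). auto.
      - destruct (Rle_lt_or_eq_dec _ _ Hlu) as [Hlt|Heq].
        + destruct (fix_between' o h hi lo up Hh Hinv Hlt Hg Hg') as [s [Hs1 Hs2]].
          apply (Hnf s); auto.
        + rewrite (ph_inj o _ _ Heq) in Hg. lra. }
    destruct (gap_up (dual o) h hi up lo (incr_dual o h Hh) Hinv) with (rho := rho)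
      as [N HN]; auto.
    + rewrite !ph_dual; lra.
    + intros t; rewrite !ph_dual; intros Ht; apply Hnf; lra.
    + rewrite !ph_dual; lra.
    + destruct Hbe as [a [Ha1 Ha2]]; exists a; rewrite !ph_dual; split; auto; lra.
    + exists N. intros n v Hn Hv. destruct (HN n v Hn) as [a [Ha1 Ha2]].
      rewrite !ph_dual; lra.
      exists a; split; auto. rewrite !ph_dual in Ha2.
      replace (ph o (it n h v) - ph o a) with (- (- ph o (it n h v) - - ph o a)) by ring.
      rewrite Rabs_Ropp; auto.
Qed.

Lemma closed1 {T} (o : ord T) h hi r : incr o h -> inv h hi ->
  (forall rho, 0 < rho -> exists a, h a = a /\ r - rho < ph o a <= r) ->
  exists a, h a = a /\ ph o a = r.
Proof.
  intros Hh Hinv H.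
  destruct (sup_fix o h hi (fun a => h a = a /\ ph o a <= r)) as [s [Hs [Hs1 Hs2]]]; auto.
  - intros x [Hx _]; auto.
  - destruct (H 1) as [a Ha]; [lra|]; exists a; tauto.
  - exists r; intros x [_ Hx]; auto.
  - exists s; split; auto.
    assert (ph o s <= r).
    { destruct (Rle_or_lt (ph o s) r) as [|Hl]; auto.
      destruct (Hs2 (ph o s - r)) as [x [[_ Hx] Hx2]]; lra. }
    destruct (Rle_lt_or_eq_dec _ _ H0) as [Hl|]; auto. exfalso.
    destruct (H (r - ph o s)) as [a [Ha1 Ha2]]; [lra|].
    assert (ph o a <= ph o s) by (apply Hs1; split; auto; lra). lra.
Qed.

Lemma fix_closed {T} (o : ord T) h hi r : incr o h -> inv h hi ->
  (forall a, h a = a -> ph o a <> r) ->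
  exists rho, 0 < rho /\ forall a, h a = a -> rho <= Rabs (ph o a - r).
Proof.
  intros Hh Hinv Hn.
  apply NNPP. intros Hc.
  assert (Hc' : forall rho, 0 < rho -> exists a, h a = a /\ Rabs (ph o a - r) < rho).
  { intros rho Hrho. apply NNPP; intros Hx. apply Hc. exists rho; split; auto.
    intros a Ha. apply Rnot_lt_le. intros Hl. apply Hx. eauto. }
  destruct (classic (forall rho, 0 < rho -> exists a, h a = a /\ r - rho < ph o a <= r)) as [Hl|Hl].
  - destruct (closed1 o h hi r Hh Hinv Hl) as [a [Ha1 Ha2]]. apply (Hn a); auto.
  - apply not_all_ex_not in Hl. destruct Hl as [rho0 Hr0].
    apply imply_to_and in Hr0. destruct Hr0 as [Hr0 Hr1].
    destruct (closed1 (dual o) h hi (- r) (incr_dual o h Hh) Hinv) as [a [Ha1 Ha2]].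
    + intros rho Hrho. destruct (Hc' (Rmin rho rho0)) as [a [Ha1 Ha2]].
      { apply Rmin_glb_lt; auto. }
      exists a; split; auto. rewrite ph_dual.
      assert (Rabs (ph o a - r) < rho) by (eapply Rlt_le_trans; [apply Ha2| apply Rmin_l]).
      assert (Rabs (ph o a - r) < rho0) by (eapply Rlt_le_trans; [apply Ha2| apply Rmin_r]).
      apply Rabs_def2 in H. apply Rabs_def2 in H0.
      destruct (Rle_or_lt (ph o a) r) as [Hle|Hlt].
      * exfalso; apply Hr1; exists a; split; auto; lra.
      * lra.
    + apply (Hn a); auto. rewrite ph_dual in Ha2. lra.
Qed.


Lemma compact01 (P : R -> nat -> Prop) :
  (forall y n m, (n <= m)%nat -> P y n -> P y m) ->
  (forall x, 0 <= x <= 1 -> exists r, 0 < r /\ exists N, forall y, Rabs (y - x) < r -> P y N) ->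
  exists N, forall y, 0 <= y <= 1 -> P y N.
Proof.
  intros Hmon Hloc.
  assert (Hf : forall x, {p : R * nat | 0 <= x <= 1 -> 0 < fst p /\
                 forall y, Rabs (y - x) < fst p -> P y (snd p)}).
  { intros x. apply constructive_indefinite_description.
    destruct (classic (0 <= x <= 1)) as [Hx|Hx].
    - destruct (Hloc x Hx) as [r [Hr [N HN]]]. exists (r, N); simpl; auto.
    - exists (1, O); intros; contradiction. }
  set (rr := fun x => fst (proj1_sig (Hf x))).
  set (NN := fun x => snd (proj1_sig (Hf x))).
  assert (HrN : forall x, 0 <= x <= 1 -> 0 < rr x /\ forall y, Rabs (y - x) < rr x -> P y (NN x)).
  { intros x Hx. unfold rr, NN. destruct (Hf x) as [p Hp]; simpl; auto. }
  set (fam := mkfamily (fun x => 0 <= x <= 1) (fun x y => (0 <= x <= 1) /\ Rabs (y - x) < rr x)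
                (fun x H => match H with ex_intro _ y Hy => proj1 Hy end)).
  destruct (compact_P3 0 1 fam) as [D [Hcov [l Hl]]].
  - split.
    + intros y Hy. exists y. simpl. split; auto. unfold Rminus; rewrite Rplus_opp_r, Rabs_R0.
      apply HrN; auto.
    + intros x y Hy. simpl in Hy. destruct Hy as [Hx Hyx].
      assert (Hd : 0 < rr x - Rabs (y - x)) by lra.
      exists (mkposreal _ Hd). intros z Hz. unfold disc in Hz; simpl in Hz. simpl. split; auto.
      replace (z - x) with ((z - y) + (y - x)) by ring.
      eapply Rle_lt_trans; [apply Rabs_triang|]. lra.
  - assert (Hlist : exists N, forall x, In x l -> forall y, (0 <= x <= 1) -> Rabs (y - x) < rr x -> P y N).
    { clear Hl. induction l as [|x l IH].
      - exists O; intros x Hx; inversion Hx.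
      - destruct IH as [N HN].
        exists (Nat.max N (NN x)). intros x' [<-|Hin] y Hx Hy.
        + apply (Hmon _ (NN x)); [lia|]. apply HrN; auto.
        + apply (Hmon _ N); [lia|]. apply (HN x'); auto. }
    destruct Hlist as [N HN]. exists N. intros y Hy.
    destruct (Hcov y Hy) as [x [[Hx1 Hx2] HDx]].
    apply (HN x); auto. apply Hl. simpl. split; auto.
Qed.


Record per (T : Type) := mkper {
  po : ord T;
  tau : T -> T;
  taui : T -> T;
  tau_ph : forall x, ph po (tau x) = ph po x + 1;
  tau_inv : inv tau taui
}.
Arguments po {T} p.
Arguments tau {T} p x.
Arguments taui {T} p x.
Arguments tau_ph {T} p x.
Arguments tau_inv {T} p.

Lemma taui_ph {T} (p : per T) x : ph (po p) (taui p x) = ph (po p) x - 1.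
Proof. destruct (tau_inv p) as [_ H]. rewrite <- (H x) at 2. rewrite tau_ph. ring. Qed.

Lemma it_tau_ph {T} (p : per T) n x : ph (po p) (it n (tau p) x) = ph (po p) x + INR n.
Proof. induction n; simpl it; [simpl; ring|]. rewrite tau_ph, IHn, S_INR. ring. Qed.

Lemma it_taui_ph {T} (p : per T) n x : ph (po p) (it n (taui p) x) = ph (po p) x - INR n.
Proof. induction n; simpl it; [simpl; ring|]. rewrite taui_ph, IHn, S_INR. ring. Qed.

Lemma nat_above r : exists n : nat, r < INR n.
Proof.
  destruct (archimed r) as [H1 H2].
  destruct (Z_le_gt_dec 0 (up r)) as [Hz|Hz].
  - exists (S (Z.to_nat (up r))). rewrite S_INR, INR_IZR_INZ, Z2Nat.id; auto. lra.
  - exists O. simpl. apply Z.gt_lt in Hz. apply IZR_lt in Hz. lra.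
Qed.

Lemma shift01 {T} (p : per T) t : exists n,
  (0 <= ph (po p) (it n (taui p) t) <= 1) \/ (0 <= ph (po p) (it n (tau p) t) <= 1).
Proof.
  set (r := ph (po p) t). destruct (archimed r) as [H1 H2].
  set (k := (up r - 1)%Z).
  assert (Hk : IZR k <= r < IZR k + 1).
  { unfold k. rewrite minus_IZR. simpl. lra. }
  destruct (Z_le_gt_dec 0 k) as [Hz|Hz].
  - exists (Z.to_nat k). left. rewrite it_taui_ph, INR_IZR_INZ, Z2Nat.id; auto. fold r; lra.
  - exists (Z.to_nat (- k)). right. rewrite it_tau_ph, INR_IZR_INZ, Z2Nat.id; [|lia].
    rewrite opp_IZR. fold r; lra.
Qed.

Definition comm {T} (h g : T -> T) := forall x, h (g x) = g (h x).

Lemma comm_inv {T} (h hi g : T -> T) : inv h hi -> comm h g -> comm hi g.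
Proof.
  intros [H1 H2] Hc x. rewrite <- (H1 (g (hi x))). rewrite Hc, H2. auto.
Qed.

Lemma comm_inv2 {T} (h g gi : T -> T) : inv g gi -> comm h g -> comm h gi.
Proof.
  intros [H1 H2] Hc x. rewrite <- (H1 (h (gi x))). rewrite <- Hc, H2. auto.
Qed.

Lemma comm_it {T} (h g : T -> T) n m : comm h g -> comm (it n h) (it m g).
Proof.
  intros Hc. assert (forall n x, it n h (g x) = g (it n h x)) by (intros; apply it_comm; auto).
  intros x. induction m; simpl; auto. rewrite H, IHm. auto.
Qed.

Definition near {T} (o : ord T) (h : T -> T) rho x := exists a, h a = a /\ Rabs (ph o x - ph o a) < rho.
Definition far {T} (o : ord T) (h : T -> T) rho x := forall a, h a = a -> rho <= Rabs (ph o x - ph o a).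

Lemma fix_comm {T} (h g : T -> T) a : comm h g -> h a = a -> h (g a) = g a.
Proof. intros Hc Ha. rewrite Hc, Ha. auto. Qed.

Lemma fix_it {T} (h g : T -> T) n a : comm h g -> h a = a -> h (it n g a) = it n g a.
Proof.
  intros Hc Ha. pose proof (comm_it h g 1 n Hc a). simpl in H. rewrite H, Ha. auto.
Qed.

Lemma per_comm_i {T} (p : per T) h : comm h (tau p) -> comm h (taui p).
Proof. intros; eapply comm_inv2; eauto. apply tau_inv. Qed.

Lemma near_tau {T} (p : per T) h n rho x : comm h (tau p) ->
  near (po p) h rho x -> near (po p) h rho (it n (tau p) x).
Proof.
  intros Hc [a [Ha1 Ha2]]. exists (it n (tau p) a). split. apply fix_it; auto.
  rewrite !it_tau_ph. replace (ph (po p) x + INR n - (ph (po p) a + INR n)) with (ph (po p) x - ph (po p) a) by ring. auto.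
Qed.

Lemma near_taui {T} (p : per T) h n rho x : comm h (tau p) ->
  near (po p) h rho x -> near (po p) h rho (it n (taui p) x).
Proof.
  intros Hc [a [Ha1 Ha2]]. exists (it n (taui p) a). split. apply fix_it; auto. apply per_comm_i; auto.
  rewrite !it_taui_ph. replace (ph (po p) x - INR n - (ph (po p) a - INR n)) with (ph (po p) x - ph (po p) a) by ring. auto.
Qed.

Lemma far_tau {T} (p : per T) h n rho x : comm h (tau p) ->
  far (po p) h rho x -> far (po p) h rho (it n (tau p) x).
Proof.
  intros Hc Hf a Ha. specialize (Hf (it n (taui p) a) (fix_it _ _ _ _ (per_comm_i p h Hc) Ha)).
  rewrite it_taui_ph in Hf. rewrite it_tau_ph.
  replace (ph (po p) x + INR n - ph (po p) a) with (ph (po p) x - (ph (po p) a - INR n)) by ring. auto.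
Qed.

Lemma far_taui {T} (p : per T) h n rho x : comm h (tau p) ->
  far (po p) h rho x -> far (po p) h rho (it n (taui p) x).
Proof.
  intros Hc Hf a Ha. specialize (Hf (it n (tau p) a) (fix_it _ _ _ _ Hc Ha)).
  rewrite it_tau_ph in Hf. rewrite it_taui_ph.
  replace (ph (po p) x - INR n - ph (po p) a) with (ph (po p) x - (ph (po p) a + INR n)) by ring. auto.
Qed.

Lemma fix_above {T} (p : per T) h M : comm h (tau p) -> (exists a, h a = a) ->
  exists a, h a = a /\ M < ph (po p) a.
Proof.
  intros Hc [a Ha]. destruct (nat_above (M - ph (po p) a)) as [n Hn].
  exists (it n (tau p) a). split. apply fix_it; auto. rewrite it_tau_ph. lra.
Qed.

Lemma fix_below {T} (p : per T) h M : comm h (tau p) -> (exists a, h a = a) ->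
  exists a, h a = a /\ ph (po p) a < M.
Proof.
  intros Hc [a Ha]. destruct (nat_above (ph (po p) a - M)) as [n Hn].
  exists (it n (taui p) a). split. apply fix_it; auto. apply per_comm_i; auto. rewrite it_taui_ph. lra.
Qed.

Lemma local_conv {T} (p : per T) h hi rho x : incr (po p) h -> inv h hi -> comm h (tau p) ->
  (exists a, h a = a) -> 0 < rho ->
  exists r, 0 < r /\ exists N, forall v, Rabs (ph (po p) v - x) < r -> far (po p) h rho v ->
    forall n, (N <= n)%nat -> near (po p) h rho (it n h v) /\ near (po p) h rho (it n hi v).
Proof.
  intros Hh Hinv Hc Hne Hrho. set (o := po p).
  destruct (classic (exists v0, Rabs (ph o v0 - x) < rho / 2 /\ far o h rho v0)) as [[v0 [Hv0 Hf0]]|Hno].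
  2:{ exists (rho / 2). split; [lra|]. exists O. intros v Hv Hf. exfalso; apply Hno; eauto. }
  exists (rho / 2). split; [lra|].
  set (S := fun v => Rabs (ph o v - x) < rho / 2).
  destruct (inf_ex o S) as [lo [Hlo1 Hlo2]].
  { exists v0; auto. }
  { exists (x - rho / 2). intros v Hv; unfold S in Hv; apply Rabs_def2 in Hv; lra. }
  destruct (sup_ex o S) as [up [Hup1 Hup2]].
  { exists v0; auto. }
  { exists (x + rho / 2). intros v Hv; unfold S in Hv; apply Rabs_def2 in Hv; lra. }
  assert (Hlox : x - rho / 2 <= ph o lo).
  { destruct (Rle_or_lt (x - rho / 2) (ph o lo)) as [|Hl]; auto.
    destruct (Hlo2 (x - rho / 2 - ph o lo)) as [v [Hv Hv2]]; [lra|].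
    unfold S in Hv; apply Rabs_def2 in Hv; lra. }
  assert (Hupx : ph o up <= x + rho / 2).
  { destruct (Rle_or_lt (ph o up) (x + rho / 2)) as [|Hl]; auto.
    destruct (Hup2 (ph o up - (x + rho / 2))) as [v [Hv Hv2]]; [lra|].
    unfold S in Hv; apply Rabs_def2 in Hv; lra. }
  assert (Hv0b : ph o lo <= ph o v0 <= ph o up) by (split; [apply Hlo1|apply Hup1]; auto).
  apply Rabs_def2 in Hv0.
  assert (Hnf : forall t, ph o lo <= ph o t <= ph o up -> h t <> t).
  { intros t Ht Hft. specialize (Hf0 t Hft).
    assert (Rabs (ph o v0 - ph o t) < rho) by (apply Rabs_def1; lra). lra. }
  assert (Hhi := incr_inv o h hi Hh Hinv).
  assert (Hinv' := inv_sym h hi Hinv).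
  destruct (gap_gen o h hi lo up Hh Hinv) with (rho := rho) as [N1 HN1]; auto; try lra.
  { apply fix_above; auto. }
  { apply fix_below; auto. }
  destruct (gap_gen o hi h lo up Hhi Hinv') with (rho := rho) as [N2 HN2]; auto; try lra.
  { intros t Ht Hft. apply (Hnf t Ht). rewrite <- Hft at 1. apply Hinv. }
  { destruct (fix_above p h (ph o up) Hc Hne) as [a [Ha1 Ha2]]. exists a; split; auto.
    apply (fix_inv h hi); auto. }
  { destruct (fix_below p h (ph o lo) Hc Hne) as [a [Ha1 Ha2]]. exists a; split; auto.
    apply (fix_inv h hi); auto. }
  exists (Nat.max N1 N2). intros v Hv Hfv n Hn.
  assert (Hvb : ph o lo <= ph o v <= ph o up) by (split; [apply Hlo1|apply Hup1]; auto).
  split.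
  - destruct (HN1 n v) as [a [Ha1 Ha2]]; auto; [lia|]. exists a; auto.
  - destruct (HN2 n v) as [a [Ha1 Ha2]]; auto; [lia|]. exists a; split; auto.
    apply (fix_inv hi h); auto.
Qed.

Lemma unif_conv {T} (p : per T) h hi rho : incr (po p) h -> inv h hi -> comm h (tau p) ->
  (exists a, h a = a) -> 0 < rho ->
  exists N, forall v, far (po p) h rho v ->
    forall n, (N <= n)%nat -> near (po p) h rho (it n h v) /\ near (po p) h rho (it n hi v).
Proof.
  intros Hh Hinv Hc Hne Hrho. set (o := po p).
  destruct (compact01 (fun y N => forall v, ph o v = y -> far o h rho v ->
    forall n, (N <= n)%nat -> near o h rho (it n h v) /\ near o h rho (it n hi v))) as [N HN].
  - intros y n m Hnm H v Hv Hf k Hk. apply H; auto. lia.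
  - intros x Hx. destruct (local_conv p h hi rho x Hh Hinv Hc Hne Hrho) as [r [Hr [N HN]]].
    exists r; split; auto. exists N. intros y Hy v Hv. subst y. apply HN; auto.
  - exists N. intros v Hf n Hn.
    assert (Hci := per_comm_i p h Hc).
    assert (Hcii : comm hi (tau p)) by (eapply comm_inv; eauto).
    assert (Hciii : comm hi (taui p)) by (eapply comm_inv2; eauto; apply tau_inv).
    destruct (tau_inv p) as [Ht1 Ht2].
    destruct (shift01 p v) as [k [Hk|Hk]].
    + destruct (HN _ Hk (it k (taui p) v) eq_refl) with (n := n) as [H1 H2]; auto.
      { apply far_taui; auto. }
      rewrite (comm_it h (taui p) n k Hci) in H1.
      rewrite (comm_it hi (taui p) n k Hciii) in H2.
      apply (near_tau p h k) in H1; auto. apply (near_tau p h k) in H2; auto.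
      rewrite (proj2 (it_inv (tau p) (taui p) k (tau_inv p))) in H1, H2. auto.
    + destruct (HN _ Hk (it k (tau p) v) eq_refl) with (n := n) as [H1 H2]; auto.
      { apply far_tau; auto. }
      rewrite (comm_it h (tau p) n k Hc) in H1.
      rewrite (comm_it hi (tau p) n k Hcii) in H2.
      apply (near_taui p h k) in H1; auto. apply (near_taui p h k) in H2; auto.
      rewrite (proj1 (it_inv (tau p) (taui p) k (tau_inv p))) in H1, H2. auto.
Qed.


Lemma inv_small rho : 0 < rho -> exists N, / (INR N + 1) < rho.
Proof.
  intros Hr. destruct (nat_above (/ rho)) as [N HN]. exists N.
  assert (0 < / rho) by (apply Rinv_0_lt_compat; auto).
  rewrite <- (Rinv_inv rho). apply Rinv_lt_contravar.
  - apply Rmult_lt_0_compat; auto. lra.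
  - lra.
Qed.

Lemma inv_mono n m : (n <= m)%nat -> / (INR m + 1) <= / (INR n + 1).
Proof.
  intros H. apply le_INR in H. pose proof (pos_INR n).
  apply Rinv_le_contravar; lra.
Qed.

Lemma sep {T} (p : per T) h hi g gi : incr (po p) h -> inv h hi -> incr (po p) g -> inv g gi ->
  comm h (tau p) -> comm g (tau p) -> (forall x, h x = x -> g x <> x) ->
  exists d, 0 < d /\ forall a b, h a = a -> g b = b -> d <= Rabs (ph (po p) a - ph (po p) b).
Proof.
  intros Hh Hhinv Hg Hginv Hch Hcg Hdis. set (o := po p).
  destruct (compact01 (fun y N => forall a b, h a = a -> g b = b -> ph o a = y ->
     / (INR N + 1) <= Rabs (ph o a - ph o b))) as [N HN].
  - intros y n m Hnm H a b Ha Hb Hy. specialize (H a b Ha Hb Hy). pose proof (inv_mono n m Hnm). lra.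
  - intros x Hx. destruct (classic (exists a, h a = a /\ ph o a = x)) as [[a0 [Ha0 Hax]]|Hno].
    + destruct (fix_closed o g gi x Hg Hginv) as [rho [Hrho Hr]].
      { intros b Hb Hbx. apply (Hdis a0 Ha0). rewrite (ph_inj o a0 b); auto. lra. }
      exists (rho / 2). split; [lra|]. destruct (inv_small (rho / 2)) as [N HN]; [lra|].
      exists N. intros y Hy a b Ha Hb Hay. specialize (Hr b Hb).
      assert (Rabs (ph o b - x) <= Rabs (ph o b - ph o a) + Rabs (ph o a - x)).
      { replace (ph o b - x) with ((ph o b - ph o a) + (ph o a - x)) by ring. apply Rabs_triang. }
      rewrite (Rabs_minus_sym (ph o b) (ph o a)) in H. subst y. lra.
    + destruct (fix_closed o h hi x Hh Hhinv) as [rho [Hrho Hr]].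
      { intros a Ha Hax. apply Hno; eauto. }
      exists rho. split; auto. exists O. intros y Hy a b Ha Hb Hay. subst y.
      specialize (Hr a Ha). lra.
  - exists (/ (INR N + 1)). split.
    { apply Rinv_0_lt_compat. pose proof (pos_INR N); lra. }
    intros a b Ha Hb. unfold o in *. destruct (shift01 p a) as [k [Hk|Hk]].
    + specialize (HN _ Hk (it k (taui p) a) (it k (taui p) b)).
      rewrite !it_taui_ph in HN.
      replace (ph (po p) a - INR k - (ph (po p) b - INR k)) with (ph (po p) a - ph (po p) b) in HN by ring.
      apply HN; auto; apply fix_it; auto; apply per_comm_i; auto.
    + specialize (HN _ Hk (it k (tau p) a) (it k (tau p) b)).
      rewrite !it_tau_ph in HN.
      replace (ph (po p) a + INR k - (ph (po p) b + INR k)) with (ph (po p) a - ph (po p) b) in HN by ring.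
      apply HN; auto; apply fix_it; auto.
Qed.

Lemma last_def {A} (x : A) l d d' : last (x :: l) d = last (x :: l) d'.
Proof. revert x; induction l; intros x; [reflexivity|]. change (last (a :: l) d = last (a :: l) d'). apply IHl. Qed.

Definition Xsets {X} (f f' g g' : X -> X) (U V : X -> Prop) (l : letter) (x : X) : Prop :=
    match l with
    | (false, false) => exists k v, (1 <= k)%nat /\ V v /\ x = it k f v
    | (false, true) => exists k v, (1 <= k)%nat /\ V v /\ x = it k f' v
    | (true, false) => exists k u, (1 <= k)%nat /\ U u /\ x = it k g u
    | (true, true) => exists k u, (1 <= k)%nat /\ U u /\ x = it k g' u
    end.

Lemma pingpong {X} (f f' g g' : X -> X) (U V : X -> Prop) a0 b0 :
  (forall x, f' (f x) = x) -> (forall x, f (f' x) = x) ->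
  (forall x, g' (g x) = x) -> (forall x, g (g' x) = x) ->
  (forall x, U x -> V x -> False) ->
  (forall v k, V v -> (1 <= k)%nat -> U (it k f v) /\ U (it k f' v)) ->
  (forall u k, U u -> (1 <= k)%nat -> V (it k g u) /\ V (it k g' u)) ->
  U a0 -> V b0 -> f a0 = a0 -> g b0 = b0 ->
  forall w, w <> nil -> reduced w -> exists x, eval_word f f' g g' w x <> x.
Proof.
  intros Hf1 Hf2 Hg1 Hg2 HUV HfV HgU Ha0 Hb0 Hfa Hgb.
  set (Xs := Xsets f f' g g' U V).
  assert (XU : forall l x, fst l = false -> Xs l x -> U x).
  { intros [[|] [|]] x Hl Hx; simpl in Hl; try discriminate; destruct Hx as [k [v [Hk [Hv ->]]]];
      apply HfV; auto. }
  assert (XV : forall l x, fst l = true -> Xs l x -> V x).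
  { intros [[|] [|]] x Hl Hx; simpl in Hl; try discriminate; destruct Hx as [k [v [Hk [Hv ->]]]];
      apply HgU; auto. }
  assert (Hstep : forall l l' x, ~ (fst l = fst l' /\ snd l = negb (snd l')) -> Xs l' x ->
             Xs l (eval_letter f f' g g' l x)).
  { intros [[|] [|]] [[|] [|]] x Hn Hx; simpl in Hn; unfold Xs; simpl Xsets; simpl eval_letter;
      first [ exfalso; apply Hn; split; reflexivity
            | destruct Hx as [k [v [Hk [Hv ->]]]]; exists (S k), v; split; [lia|split; [exact Hv|reflexivity]]
            | exists 1%nat, x; split; [lia| split; [first [(eapply XU; [ | exact Hx]; reflexivity) | (eapply XV; [ | exact Hx]; reflexivity)] | reflexivity]] ]. }
  set (base := fun l : letter => if fst l then a0 else b0).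
  assert (Hind : forall w l, reduced (l :: w) -> Xs l (eval_word f f' g g' (l :: w) (base (last (l :: w) l)))).
  { induction w as [|l2 w IH]; intros l Hr.
    - destruct l as [[|] [|]]; unfold Xs; simpl; (exists 1%nat); eexists; (split; [lia|]); (split; [|reflexivity]); auto.
    - simpl in Hr. destruct Hr as [Hn Hr].
      specialize (IH l2 Hr).
      change (eval_word f f' g g' (l :: l2 :: w) (base (last (l :: l2 :: w) l)))
        with (eval_letter f f' g g' l (eval_word f f' g g' (l2 :: w) (base (last (l2 :: w) l)))).
      rewrite (last_def l2 w l l2). apply (Hstep l l2); auto. }
  intros [|l w] Hne Hr; [contradiction|].
  exists (base (last (l :: w) l)). intros Heq.
  specialize (Hind w l Hr). rewrite Heq in Hind.
  assert (Hb0' : forall k, it k g' b0 = b0).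
  { intros k; apply it_fix. rewrite <- Hgb at 1. auto. }
  assert (Hb0'' : forall k, it k g b0 = b0) by (intros; apply it_fix; auto).
  assert (Ha0' : forall k, it k f' a0 = a0).
  { intros k; apply it_fix. rewrite <- Hfa at 1. auto. }
  assert (Ha0'' : forall k, it k f a0 = a0) by (intros; apply it_fix; auto).
  unfold base in Hind. destruct (fst (last (l :: w) l)).
  -
    destruct l as [[|] [|]]; unfold Xs in Hind; simpl in Hind.
    + apply (XV (true, true)) in Hind; auto. eapply HUV; eauto.
    + apply (XV (true, false)) in Hind; auto. eapply HUV; eauto.
    + destruct Hind as [k [v [Hk [Hv Heq']]]].
      assert (v = a0).
      { rewrite <- (Ha0'' k). rewrite Heq'. symmetry; apply (proj2 (it_inv f f' k (conj Hf1 Hf2))). }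
      subst v. eapply HUV; eauto.
    + destruct Hind as [k [v [Hk [Hv Heq']]]].
      assert (v = a0).
      { rewrite <- (Ha0' k). rewrite Heq'. symmetry; apply (proj1 (it_inv f f' k (conj Hf1 Hf2))). }
      subst v. eapply HUV; eauto.
  - destruct l as [[|] [|]]; unfold Xs in Hind; simpl in Hind.
    + destruct Hind as [k [v [Hk [Hv Heq']]]].
      assert (v = b0).
      { rewrite <- (Hb0'' k). rewrite Heq'. symmetry; apply (proj2 (it_inv g g' k (conj Hg1 Hg2))). }
      subst v. eapply HUV; eauto.
    + destruct Hind as [k [v [Hk [Hv Heq']]]].
      assert (v = b0).
      { rewrite <- (Hb0' k). rewrite Heq'. symmetry; apply (proj1 (it_inv g g' k (conj Hg1 Hg2))). }
      subst v. eapply HUV; eauto.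
    + apply (XU (false, true)) in Hind; auto. eapply HUV; eauto.
    + apply (XU (false, false)) in Hind; auto. eapply HUV; eauto.
Qed.


Lemma far_of_near {T} (o : ord T) h g d x : 0 < d ->
  (forall a b, h a = a -> g b = b -> d <= Rabs (ph o a - ph o b)) ->
  near o g (d / 2) x -> far o h (d / 2) x.
Proof.
  intros Hd Hs [b [Hb1 Hb2]] a Ha. specialize (Hs a b Ha Hb1).
  assert (Rabs (ph o a - ph o b) <= Rabs (ph o x - ph o a) + Rabs (ph o x - ph o b)).
  { replace (ph o a - ph o b) with (- (ph o x - ph o a) + (ph o x - ph o b)) by ring.
    eapply Rle_trans; [apply Rabs_triang|]. rewrite Rabs_Ropp. lra. }
  lra.
Qed.

Theorem core {T} (p : per T) al ali be bei :
  incr (po p) al -> inv al ali -> incr (po p) be -> inv be bei ->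
  comm al (tau p) -> comm be (tau p) -> (exists a, al a = a) -> (exists b, be b = b) ->
  (forall x, al x = x -> be x <> x) ->
  exists N M, forall w, w <> nil -> reduced w ->
    exists x, eval_word (it N al) (it N ali) (it M be) (it M bei) w x <> x.
Proof.
  intros Hal Hali Hbe Hbei Hca Hcb [a0 Ha0] [b0 Hb0] Hdis.
  destruct (sep p al ali be bei Hal Hali Hbe Hbei Hca Hcb Hdis) as [d [Hd Hs]].
  assert (Hs' : forall b a, be b = b -> al a = a -> d <= Rabs (ph (po p) b - ph (po p) a)).
  { intros b a Hb Ha. rewrite Rabs_minus_sym. auto. }
  destruct (unif_conv p al ali (d / 2) Hal Hali Hca (ex_intro _ a0 Ha0)) as [N0 HN0]; [lra|].
  destruct (unif_conv p be bei (d / 2) Hbe Hbei Hcb (ex_intro _ b0 Hb0)) as [M0 HM0]; [lra|].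
  exists (S N0), (S M0).
  apply (pingpong _ _ _ _ (near (po p) al (d / 2)) (near (po p) be (d / 2)) a0 b0).
  - apply (it_inv al ali (S N0) Hali).
  - apply (it_inv al ali (S N0) Hali).
  - apply (it_inv be bei (S M0) Hbei).
  - apply (it_inv be bei (S M0) Hbei).
  - intros x [a [Ha1 Ha2]] [b [Hb1 Hb2]]. specialize (Hs a b Ha1 Hb1).
    assert (Rabs (ph (po p) a - ph (po p) b) <= Rabs (ph (po p) x - ph (po p) a) + Rabs (ph (po p) x - ph (po p) b)).
    { replace (ph (po p) a - ph (po p) b) with (- (ph (po p) x - ph (po p) a) + (ph (po p) x - ph (po p) b)) by ring.
      eapply Rle_trans; [apply Rabs_triang|]. rewrite Rabs_Ropp. lra. }
    lra.
  - intros v k Hv Hk. rewrite <- !it_mul.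
    apply HN0; [apply (far_of_near (po p) al be d v Hd Hs Hv)|nia].
  - intros u k Hu Hk. rewrite <- !it_mul.
    apply HM0; [apply (far_of_near (po p) be al d u Hd Hs' Hu)|nia].
  - exists a0; split; auto. unfold Rminus; rewrite Rplus_opp_r, Rabs_R0; lra.
  - exists b0; split; auto. unfold Rminus; rewrite Rplus_opp_r, Rabs_R0; lra.
  - apply it_fix; auto.
  - apply it_fix; auto.
Qed.


Definition zp {T} (tau taui : T -> T) (k : Z) (x : T) : T :=
  if (0 <=? k)%Z then it (Z.to_nat k) tau x else it (Z.to_nat (- k)) taui x.

Lemma zp_neg {T} (tau taui : T -> T) k x : (k <= 0)%Z -> zp tau taui k x = it (Z.to_nat (- k)) taui x.
Proof.
  intros Hk. unfold zp. destruct (Z.leb_spec 0 k); auto.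
  assert (k = 0%Z) by lia. subst. reflexivity.
Qed.

Lemma zp_succ {T} (tau taui : T -> T) k x : inv tau taui -> zp tau taui (k + 1) x = tau (zp tau taui k x).
Proof.
  intros [H1 H2].
  destruct (Z_le_gt_dec 0 k) as [Hk|Hk].
  - unfold zp. destruct (Z.leb_spec 0 (k+1)); [|lia]. destruct (Z.leb_spec 0 k); [|lia].
    rewrite Z2Nat.inj_add by lia. rewrite Nat.add_comm. reflexivity.
  - rewrite (zp_neg _ _ k) by lia. rewrite (zp_neg _ _ (k+1)) by lia.
    replace (Z.to_nat (- k)) with (S (Z.to_nat (- (k + 1)))) by lia.
    simpl. rewrite H2. auto.
Qed.

Lemma zp_pred {T} (tau taui : T -> T) k x : inv tau taui -> zp tau taui (k - 1) x = taui (zp tau taui k x).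
Proof.
  intros Hi. replace k with ((k - 1) + 1)%Z at 2 by lia. rewrite zp_succ; auto.
  destruct Hi as [H1 H2]. rewrite H1. auto.
Qed.

Lemma zp_0 {T} (tau taui : T -> T) x : zp tau taui 0 x = x.
Proof. reflexivity. Qed.

Lemma zp_1 {T} (tau taui : T -> T) x : zp tau taui 1 x = tau x.
Proof. reflexivity. Qed.

Lemma zp_add {T} (tau taui : T -> T) a b x : inv tau taui ->
  zp tau taui (a + b) x = zp tau taui a (zp tau taui b x).
Proof.
  intros Hi. induction a using Z.peano_ind.
  - reflexivity.
  - replace (Z.succ a + b)%Z with ((a + b) + 1)%Z by lia. rewrite zp_succ, IHa; auto.
    replace (Z.succ a) with (a + 1)%Z by lia. rewrite zp_succ; auto.
  - replace (Z.pred a + b)%Z with ((a + b) - 1)%Z by lia. rewrite zp_pred, IHa; auto.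
    replace (Z.pred a) with (a - 1)%Z by lia. rewrite zp_pred; auto.
Qed.

Lemma zp_inv {T} (tau taui : T -> T) k : inv tau taui -> inv (zp tau taui k) (zp tau taui (- k)).
Proof.
  intros Hi; split; intros x; rewrite <- zp_add; auto; replace (_ + _)%Z with 0%Z by lia; reflexivity.
Qed.

Lemma zp_incr {T} (o : ord T) (tau taui : T -> T) k : incr o tau -> inv tau taui -> incr o (zp tau taui k).
Proof.
  intros Ht Hi. unfold zp. destruct (0 <=? k)%Z.
  - apply it_incr; auto.
  - apply it_incr; apply (incr_inv o tau); auto.
Qed.

Lemma zp_up {T} (o : ord T) (tau taui : T -> T) k k' x : incr o tau -> inv tau taui ->
  (forall y, ph o y < ph o (tau y)) -> (k < k')%Z -> ph o (zp tau taui k x) < ph o (zp tau taui k' x).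
Proof.
  intros Ht Hi Hup Hk.
  replace k' with ((k' - k - 1) + 1 + k)%Z by lia. rewrite zp_add; auto.
  set (y := zp tau taui k x). rewrite zp_succ; auto.
  assert (Hn : (0 <= k' - k - 1)%Z) by lia.
  unfold zp at 1. destruct (Z.leb_spec 0 (k' - k - 1)); [|lia].
  induction (Z.to_nat (k' - k - 1)); simpl; auto.
  specialize (Hup (tau (it n tau y))). lra.
Qed.

Lemma zp_le {T} (o : ord T) (tau taui : T -> T) k k' x : incr o tau -> inv tau taui ->
  (forall y, ph o y < ph o (tau y)) -> (k <= k')%Z -> ph o (zp tau taui k x) <= ph o (zp tau taui k' x).
Proof.
  intros Ht Hi Hup Hk. destruct (Z.eq_dec k k') as [->|Hne]; [lra|].
  left; apply zp_up; auto; lia.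
Qed.

Lemma nat_step (P : nat -> Prop) N : P O -> ~ P N -> exists j, P j /\ ~ P (S j).
Proof.
  intros H0 HN. induction N; [contradiction|].
  destruct (classic (P N)) as [HP|HP]; eauto.
Qed.


Lemma iso_sup {T} (o : ord T) h hi (S : T -> Prop) s : incr o h -> inv h hi ->
  (forall x, S x -> ph o x <= ph o s) -> (forall e, 0 < e -> exists x, S x /\ ph o s - e < ph o x) ->
  forall e, 0 < e -> exists x, S x /\ ph o (h s) - e < ph o (h x).
Proof.
  intros Hh Hinv Hub Hap e He.
  destruct (sup_ex o (fun y => exists x, S x /\ y = h x)) as [s' [Hs1 Hs2]].
  { destruct (Hap 1) as [x [Sx _]]; [lra|]. exists (h x); eauto. }
  { exists (ph o (h s)). intros y [x [Sx ->]]. apply incr_le; auto. }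
  assert (Hle : ph o (h s) <= ph o s').
  { destruct (Rle_or_lt (ph o (h s)) (ph o s')) as [|Hl]; auto. exfalso.
    destruct Hinv as [Hi1 Hi2].
    assert (Hhs : ph o (hi s') < ph o s).
    { apply (incr_rev o h); auto. rewrite Hi2; auto. }
    destruct (Hap (ph o s - ph o (hi s'))) as [x [Sx Hx]]; [lra|].
    assert (ph o (h x) <= ph o s') by (apply Hs1; eauto).
    assert (ph o x <= ph o (hi s')) by (apply (incr_rev_le o h); auto; rewrite Hi2; auto).
    lra. }
  destruct (Hs2 e He) as [y [[x [Sx ->]] Hy]]. exists x; split; auto. lra.
Qed.

Lemma iso_inf {T} (o : ord T) h hi (S : T -> Prop) s : incr o h -> inv h hi ->
  (forall x, S x -> ph o s <= ph o x) -> (forall e, 0 < e -> exists x, S x /\ ph o x < ph o s + e) ->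
  forall e, 0 < e -> exists x, S x /\ ph o (h x) < ph o (h s) + e.
Proof.
  intros Hh Hinv Hlb Hap e He.
  destruct (iso_sup (dual o) h hi S s (incr_dual o h Hh) Hinv) with (e := e) as [x [Sx Hx]]; auto.
  - intros x Sx; rewrite !ph_dual; specialize (Hlb x Sx); lra.
  - intros e' He'; destruct (Hap e' He') as [x [Sx Hx]]; exists x; split; auto; rewrite !ph_dual; lra.
  - exists x; split; auto. rewrite !ph_dual in Hx; lra.
Qed.

Lemma frac_bounds a L : 0 < L -> 0 <= a < L -> 0 <= a / L < 1.
Proof.
  intros HL [H1 H2]. split.
  - unfold Rdiv; apply Rmult_le_pos; auto. left; apply Rinv_0_lt_compat; auto.
  - apply (Rmult_lt_reg_r L); auto. unfold Rdiv; rewrite Rmult_assoc, Rinv_l; lra.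
Qed.


Lemma make_per {T} (o : ord T) (t1 ti : T -> T) (x0 : T) : incr o t1 -> inv t1 ti ->
  (forall x, ph o x < ph o (t1 x)) ->
  exists p : per T, tau p = t1 /\ taui p = ti /\
     (forall x y, ph o x < ph o y <-> ph (po p) x < ph (po p) y).
Proof.
  intros Ht Hi Hup.
  set (Z' := zp t1 ti).
  assert (Hti := incr_inv o t1 ti Ht Hi).
  assert (Hzi : forall k, incr o (Z' k)) by (intros; apply zp_incr; auto).
  assert (Hzadd : forall a b x, Z' (a + b)%Z x = Z' a (Z' b x)) by (intros; apply zp_add; auto).
  assert (Hzle : forall k k', (k <= k')%Z -> ph o (Z' k x0) <= ph o (Z' k' x0)) by (intros; apply zp_le; auto).
  assert (Hzlt : forall k k', (k < k')%Z -> ph o (Z' k x0) < ph o (Z' k' x0)) by (intros; apply zp_up; auto).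
  assert (Hunb_up : forall M, exists k, M < ph o (Z' k x0)).
  { intros M. apply NNPP; intros Hn.
    destruct (orbit_limit o t1 ti x0 Ht Hi (Hup x0)) as [s [Hs _]].
    { exists M. intros n. apply Rnot_lt_le. intros Hl. apply Hn. exists (Z.of_nat n).
      unfold Z', zp. destruct (Z.leb_spec 0 (Z.of_nat n)); [|lia]. rewrite Nat2Z.id. auto. }
    specialize (Hup s). rewrite Hs in Hup. lra. }
  assert (Hunb_dn : forall M, exists k, ph o (Z' k x0) < M).
  { intros M. apply NNPP; intros Hn.
    destruct (orbit_limit (dual o) ti t1 x0 (incr_dual o ti Hti) (inv_sym _ _ Hi)) as [s [Hs _]].
    { rewrite !ph_dual. specialize (Hup (ti x0)). rewrite (proj2 Hi) in Hup. lra. }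
    { exists (- M). intros n. rewrite ph_dual. apply Ropp_le_contravar. apply Rnot_lt_le. intros Hl.
      apply Hn. exists (- Z.of_nat n)%Z.
      rewrite (zp_neg t1 ti) by lia. rewrite Z.opp_involutive, Nat2Z.id. auto. }
    assert (Hs' : t1 s = s) by (rewrite <- Hs at 1; apply (proj2 Hi)).
    specialize (Hup s). rewrite Hs' in Hup. lra. }
  assert (Hex : forall t, exists k, ph o (Z' k x0) <= ph o t < ph o (Z' (k + 1)%Z x0)).
  { intros t. destruct (Hunb_dn (ph o t)) as [k1 Hk1]. destruct (Hunb_up (ph o t)) as [k2 Hk2].
    assert (Hk12 : (k1 < k2)%Z).
    { destruct (Z_lt_le_dec k1 k2) as [|Hle]; auto. apply Hzle in Hle. lra. }
    destruct (nat_step (fun j => ph o (Z' (k1 + Z.of_nat j)%Z x0) <= ph o t) (Z.to_nat (k2 - k1))) as [j [Hj1 Hj2]].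
    { simpl. rewrite Z.add_0_r. lra. }
    { rewrite Z2Nat.id by lia. replace (k1 + (k2 - k1))%Z with k2 by lia. lra. }
    exists (k1 + Z.of_nat j)%Z. split; auto. apply Rnot_le_lt. intros Hc; apply Hj2.
    rewrite Nat2Z.inj_succ. replace (k1 + Z.succ (Z.of_nat j))%Z with (k1 + Z.of_nat j + 1)%Z by lia. auto. }
  assert (Huniq : forall k k' t, ph o (Z' k x0) <= ph o t < ph o (Z' (k + 1)%Z x0) ->
                     ph o (Z' k' x0) <= ph o t < ph o (Z' (k' + 1)%Z x0) -> k = k').
  { intros k k' t H1 H2. destruct (Z.lt_trichotomy k k') as [Hl|[He|Hl]]; auto; exfalso.
    - assert (ph o (Z' (k + 1)%Z x0) <= ph o (Z' k' x0)) by (apply Hzle; lia). lra.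
    - assert (ph o (Z' (k' + 1)%Z x0) <= ph o (Z' k x0)) by (apply Hzle; lia). lra. }
  set (kf := fun t => proj1_sig (constructive_indefinite_description _ (Hex t))).
  assert (Hkf : forall t, ph o (Z' (kf t) x0) <= ph o t < ph o (Z' (kf t + 1)%Z x0)).
  { intros t. unfold kf. destruct (constructive_indefinite_description _ (Hex t)); auto. }
  set (L := ph o (t1 x0) - ph o x0).
  assert (HL : 0 < L) by (unfold L; specialize (Hup x0); lra).
  assert (HZ1 : forall j, Z' (- j)%Z (Z' (j + 1)%Z x0) = t1 x0).
  { intros j. rewrite <- Hzadd. replace (- j + (j + 1))%Z with 1%Z by lia. reflexivity. }
  assert (HZ0 : forall j, Z' (- j)%Z (Z' j x0) = x0).
  { intros j. rewrite <- Hzadd. replace (- j + j)%Z with 0%Z by lia. reflexivity. }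
  set (ph1 := fun t => IZR (kf t) + (ph o (Z' (- kf t)%Z t) - ph o x0) / L).
  assert (Hform : forall j t, ph o (Z' j x0) <= ph o t < ph o (Z' (j + 1)%Z x0) ->
             ph1 t = IZR j + (ph o (Z' (- j)%Z t) - ph o x0) / L).
  { intros j t Hj. unfold ph1. rewrite (Huniq (kf t) j t); auto. }
  assert (Hfrac : forall j t, ph o (Z' j x0) <= ph o t < ph o (Z' (j + 1)%Z x0) ->
             0 <= (ph o (Z' (- j)%Z t) - ph o x0) / L < 1).
  { intros j t [Hj1 Hj2]. apply frac_bounds; auto.
    apply (incr_le o (Z' (- j)%Z)) in Hj1; auto. apply (Hzi (- j)%Z) in Hj2.
    rewrite HZ0 in Hj1. rewrite HZ1 in Hj2. unfold L; lra. }
  assert (Hform' : forall j t, ph o (Z' j x0) < ph o t <= ph o (Z' (j + 1)%Z x0) ->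
             ph1 t = IZR j + (ph o (Z' (- j)%Z t) - ph o x0) / L).
  { intros j t [Hj1 Hj2]. destruct (Rle_lt_or_eq_dec _ _ Hj2) as [Hl|He].
    - apply Hform; lra.
    - apply (ph_inj o) in He. subst t.
      rewrite (Hform (j + 1)%Z).
      + rewrite HZ0, HZ1. fold L. rewrite plus_IZR. unfold Rminus. rewrite Rplus_opp_r.
        unfold Rdiv. rewrite Rmult_0_l. fold (Rminus (ph o (t1 x0)) (ph o x0)). fold L.
        rewrite Rinv_r; lra.
      + split; [lra|]. apply Hzlt; lia. }
  assert (Hmono : forall x y, ph o x < ph o y -> ph1 x < ph1 y).
  { intros x y Hxy. pose proof (Hkf x) as Hx. pose proof (Hkf y) as Hy.
    destruct (Z.lt_trichotomy (kf x) (kf y)) as [Hl|[He|Hl]].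
    - rewrite (Hform _ x Hx), (Hform _ y Hy). pose proof (Hfrac _ x Hx). pose proof (Hfrac _ y Hy).
      assert (IZR (kf x) + 1 <= IZR (kf y)) by (rewrite <- plus_IZR; apply IZR_le; lia). lra.
    - rewrite (Hform _ x Hx), (Hform _ y Hy). rewrite He.
      apply Rplus_lt_compat_l. unfold Rdiv. apply Rmult_lt_compat_r.
      + apply Rinv_0_lt_compat; auto.
      + rewrite He in *. apply Rplus_lt_compat_r. apply Hzi. auto.
    - exfalso. assert (ph o (Z' (kf y + 1)%Z x0) <= ph o (Z' (kf x) x0)) by (apply Hzle; lia). lra. }
  assert (Hiff : forall x y, ph o x < ph o y <-> ph1 x < ph1 y).
  { intros x y; split; auto. intros H.
    destruct (Rtotal_order (ph o x) (ph o y)) as [|[He|Hg]]; auto.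
    - apply (ph_inj o) in He; subst; lra.
    - apply Hmono in Hg; lra. }
  assert (Hle1 : forall x y, ph o x <= ph o y -> ph1 x <= ph1 y).
  { intros x y H. destruct (Rle_lt_or_eq_dec _ _ H) as [Hl|He].
    - left; apply Hmono; auto.
    - apply (ph_inj o) in He; subst; lra. }
  assert (Hle1' : forall x y, ph1 x <= ph1 y -> ph o x <= ph o y).
  { intros x y H. apply Rnot_lt_le. intros Hl. apply Hmono in Hl. lra. }
  assert (Hinj : forall x y, ph1 x = ph1 y -> x = y).
  { intros x y H. apply (ph_inj o). apply Rle_antisym; apply Hle1'; lra. }
  assert (HZval : forall j, ph1 (Z' j x0) = IZR j).
  { intros j. rewrite (Hform j).
    - rewrite HZ0. unfold Rminus; rewrite Rplus_opp_r. unfold Rdiv; rewrite Rmult_0_l; ring.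
    - split; [lra|]. apply Hzlt; lia. }
  assert (Hbnd_up : forall M, exists c, forall t, ph1 t <= M -> ph o t <= ph o c).
  { intros M. destruct (archimed M) as [H1 H2]. exists (Z' (up M) x0). intros t Htt.
    apply Hle1'. rewrite HZval. lra. }
  assert (Hbnd_dn : forall M, exists c, forall t, M <= ph1 t -> ph o c <= ph o t).
  { intros M. destruct (archimed (- M)) as [H1 H2]. exists (Z' (- up (- M))%Z x0). intros t Htt.
    apply Hle1'. rewrite HZval. rewrite opp_IZR. lra. }
  assert (Hsup : forall S : T -> Prop, (exists x, S x) -> (exists M, forall x, S x -> ph1 x <= M) ->
     exists s, (forall x, S x -> ph1 x <= ph1 s) /\ (forall e, 0 < e -> exists x, S x /\ ph1 s - e < ph1 x)).
  { intros S Hne [M HM]. destruct (Hbnd_up M) as [c Hc].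
    destruct (sup_ex o S Hne) as [s [Hs1 Hs2]].
    { exists (ph o c). intros x Sx. apply Hc, HM; auto. }
    exists s. split. { intros x Sx. apply Hle1; auto. }
    pose proof (Hkf s) as Hks.
    assert (Hj : exists j, ph o (Z' j x0) < ph o s <= ph o (Z' (j + 1)%Z x0)).
    { destruct (Rle_lt_or_eq_dec _ _ (proj1 Hks)) as [Hl|He].
      - exists (kf s). lra.
      - exists (kf s - 1)%Z. replace (kf s - 1 + 1)%Z with (kf s) by lia. split; [|lra].
        rewrite <- He. apply Hzlt. lia. }
    destruct Hj as [j [Hj1 Hj2]].
    intros e He.
    set (S' := fun x => S x /\ ph o (Z' j x0) < ph o x).
    destruct (iso_sup o (Z' (- j)%Z) (Z' j) S' s (Hzi _)) with (e := e * L) as [x [[Sx Hx] Hx2]].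
    { apply inv_sym. apply zp_inv; auto. }
    { intros x [Sx _]; auto. }
    { intros e' He'. destruct (Hs2 (Rmin e' (ph o s - ph o (Z' j x0)))) as [x [Sx Hx]].
      { apply Rmin_glb_lt; lra. }
      exists x. split; [split; auto|].
      - pose proof (Rmin_r e' (ph o s - ph o (Z' j x0))). lra.
      - pose proof (Rmin_l e' (ph o s - ph o (Z' j x0))). lra. }
    { apply Rmult_lt_0_compat; auto. }
    exists x. split; auto.
    rewrite (Hform' j s) by lra. rewrite (Hform' j x) by (split; auto; specialize (Hs1 x Sx); lra).
    assert (Hd : (ph o (Z' (- j)%Z s) - ph o x0) / L - e < (ph o (Z' (- j)%Z x) - ph o x0) / L).
    { apply (Rmult_lt_reg_r L); auto. unfold Rdiv. rewrite Rmult_minus_distr_r, !Rmult_assoc, Rinv_l; lra. }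
    lra. }
  assert (Hinf : forall S : T -> Prop, (exists x, S x) -> (exists M, forall x, S x -> M <= ph1 x) ->
     exists s, (forall x, S x -> ph1 s <= ph1 x) /\ (forall e, 0 < e -> exists x, S x /\ ph1 x < ph1 s + e)).
  { intros S Hne [M HM]. destruct (Hbnd_dn M) as [c Hc].
    destruct (inf_ex o S Hne) as [s [Hs1 Hs2]].
    { exists (ph o c). intros x Sx. apply Hc, HM; auto. }
    exists s. split. { intros x Sx. apply Hle1; auto. }
    pose proof (Hkf s) as Hks. set (j := kf s).
    intros e He.
    set (S' := fun x => S x /\ ph o x < ph o (Z' (j + 1)%Z x0)).
    destruct (iso_inf o (Z' (- j)%Z) (Z' j) S' s (Hzi _)) with (e := e * L) as [x [[Sx Hx] Hx2]].
    { apply inv_sym. apply zp_inv; auto. }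
    { intros x [Sx _]; auto. }
    { intros e' He'. destruct (Hs2 (Rmin e' (ph o (Z' (j + 1)%Z x0) - ph o s))) as [x [Sx Hx]].
      { apply Rmin_glb_lt; auto. fold j in Hks. lra. }
      exists x. split; [split; auto|].
      - pose proof (Rmin_r e' (ph o (Z' (j + 1)%Z x0) - ph o s)). lra.
      - pose proof (Rmin_l e' (ph o (Z' (j + 1)%Z x0) - ph o s)). lra. }
    { apply Rmult_lt_0_compat; auto. }
    exists x. split; auto.
    rewrite (Hform j s) by auto. rewrite (Hform j x) by (split; auto; specialize (Hs1 x Sx); fold j in Hks; lra).
    assert (Hd : (ph o (Z' (- j)%Z x) - ph o x0) / L < (ph o (Z' (- j)%Z s) - ph o x0) / L + e).
    { apply (Rmult_lt_reg_r L); auto. unfold Rdiv. rewrite Rmult_plus_distr_r, !Rmult_minus_distr_r, !Rmult_assoc, Rinv_l; lra. }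
    lra. }
  assert (Htau1 : forall x, ph1 (t1 x) = ph1 x + 1).
  { intros x. pose proof (Hkf x) as Hx. rewrite (Hform _ x Hx).
    rewrite (Hform (kf x + 1)%Z).
    - rewrite plus_IZR. replace (Z' (- (kf x + 1))%Z (t1 x)) with (Z' (- kf x)%Z x). ring.
      replace (t1 x) with (Z' 1%Z x) by reflexivity. rewrite <- Hzadd. f_equal. lia.
    - replace (t1 x) with (Z' 1%Z x) by reflexivity.
      replace (Z' (kf x + 1)%Z x0) with (Z' 1%Z (Z' (kf x) x0)) by (rewrite <- Hzadd; f_equal; lia).
      replace (Z' (kf x + 1 + 1)%Z x0) with (Z' 1%Z (Z' (kf x + 1)%Z x0)) by (rewrite <- Hzadd; f_equal; lia).
      split; [apply incr_le; [apply Hzi|lra] | apply Hzi; lra]. }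
  exists (mkper T (mkord T ph1 Hinj Hsup Hinf) t1 ti Htau1 Hi).
  simpl. split; auto.
Qed.


Lemma closed_pt (W : R -> Prop) m : closed_set W ->
  (forall e, 0 < e -> exists r, W r /\ Rabs (r - m) < e) -> W m.
Proof.
  intros HW H. apply NNPP; intros Hm.
  destruct (HW m Hm) as [d Hd].
  destruct (H d (cond_pos d)) as [r [Wr Hr]].
  apply (Hd r); auto.
Qed.

Lemma lub_approx (E : R -> Prop) m : is_lub E m -> forall e, 0 < e -> exists r, E r /\ m - e < r.
Proof.
  intros [Hub Hl] e He. apply NNPP; intros Hn.
  assert (is_upper_bound E (m - e)).
  { intros r Er. apply Rnot_lt_le. intros Hlt. apply Hn; eauto. }
  specialize (Hl _ H). lra.
Qed.

Definition wv (W : R -> Prop) (x : Wt W) : R := @proj1_sig R W x.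

Lemma Wt_inj (W : R -> Prop) (x y : Wt W) : wv W x = wv W y -> x = y.
Proof. destruct x, y; unfold wv; simpl; intros ->; f_equal; apply proof_irrelevance. Qed.

Lemma Wt_sup (W : R -> Prop) : closed_set W -> forall S : Wt W -> Prop, (exists x, S x) ->
  (exists M, forall x, S x -> wv W x <= M) ->
  exists s, (forall x, S x -> wv W x <= wv W s) /\
            (forall e, 0 < e -> exists x, S x /\ wv W s - e < wv W x).
Proof.
  intros HW S [x0 Sx0] [M HM].
  set (E := fun r => exists x, S x /\ r = wv W x).
  destruct (completeness E) as [m Hm].
  { exists M. intros r [x [Sx ->]]. auto. }
  { exists (wv W x0); exists x0; auto. }
  assert (Wm : W m).
  { apply closed_pt; auto. intros e He. destruct (lub_approx E m Hm e He) as [r [[x [Sx ->]] Hr]].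
    exists (wv W x). split. apply (proj2_sig x).
    assert (wv W x <= m) by (apply (proj1 Hm); exists x; auto).
    apply Rabs_def1; lra. }
  exists (exist _ m Wm). simpl. split.
  - intros x Sx. apply (proj1 Hm). exists x; auto.
  - intros e He. destruct (lub_approx E m Hm e He) as [r [[x [Sx ->]] Hr]]. eauto.
Qed.

Lemma Wt_inf (W : R -> Prop) : closed_set W -> forall S : Wt W -> Prop, (exists x, S x) ->
  (exists M, forall x, S x -> M <= wv W x) ->
  exists s, (forall x, S x -> wv W s <= wv W x) /\
            (forall e, 0 < e -> exists x, S x /\ wv W x < wv W s + e).
Proof.
  intros HW S [x0 Sx0] [M HM].
  set (E := fun r => exists x, S x /\ r = - wv W x).
  destruct (completeness E) as [m Hm].
  { exists (- M). intros r [x [Sx ->]]. specialize (HM x Sx). lra. }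
  { exists (- wv W x0); exists x0; auto. }
  assert (Wm : W (- m)).
  { apply closed_pt; auto. intros e He. destruct (lub_approx E m Hm e He) as [r [[x [Sx ->]] Hr]].
    exists (wv W x). split. apply (proj2_sig x).
    assert (- wv W x <= m) by (apply (proj1 Hm); exists x; auto).
    apply Rabs_def1; lra. }
  exists (exist _ (- m) Wm). simpl. split.
  - intros x Sx. assert (- wv W x <= m) by (apply (proj1 Hm); exists x; auto). lra.
  - intros e He. destruct (lub_approx E m Hm e He) as [r [[x [Sx ->]] Hr]]. exists x; split; auto; lra.
Qed.

Definition ordW (W : R -> Prop) (HW : closed_set W) : ord (Wt W) :=
  mkord (Wt W) (wv W) (Wt_inj W) (Wt_sup W HW) (Wt_inf W HW).

Lemma sign_nofix {T} (o : ord T) h hi : incr o h -> inv h hi -> (forall x, h x <> x) ->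
  (forall x, ph o x < ph o (h x)) \/ (forall x, ph o (h x) < ph o x).
Proof.
  intros Hh Hi Hn.
  assert (Hne : forall x, ph o x < ph o (h x) \/ ph o (h x) < ph o x).
  { intros x. destruct (Rtotal_order (ph o x) (ph o (h x))) as [|[He|]]; auto.
    exfalso; apply (Hn x); apply (ph_inj o); auto. }
  destruct (classic (forall x, ph o x < ph o (h x))) as [|Hc]; auto. right.
  apply not_all_ex_not in Hc. destruct Hc as [x Hx].
  assert (Hx' : ph o (h x) < ph o x) by (destruct (Hne x); [contradiction|auto]).
  intros y. destruct (Hne y) as [Hy|]; auto. exfalso.
  destruct (Rtotal_order (ph o x) (ph o y)) as [Hl|[He|Hg]].
  - destruct (fix_between' o h hi x y Hh Hi Hl Hx' Hy) as [s [Hs _]]. apply (Hn s); auto.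
  - apply (ph_inj o) in He; subst; lra.
  - destruct (fix_between o h hi y x Hh Hi Hg Hy Hx') as [s [Hs _]]. apply (Hn s); auto.
Qed.

Lemma final_gen {T} (o : ord T) t1 ti al ali be bei (x0 : T) : incr o t1 -> inv t1 ti ->
  (forall x, ph o x < ph o (t1 x)) -> incr o al -> inv al ali -> incr o be -> inv be bei ->
  comm al t1 -> comm be t1 -> (exists a, al a = a) -> (exists b, be b = b) ->
  (forall x, al x = x -> be x <> x) ->
  exists N M, forall w, w <> nil -> reduced w ->
    exists x, eval_word (it N al) (it N ali) (it M be) (it M bei) w x <> x.
Proof.
  intros Ht Hti Hup Hal Hali Hbe Hbei Hca Hcb HA HB Hdis.
  destruct (make_per o t1 ti x0 Ht Hti Hup) as [p [Hp1 [Hp2 Hp3]]].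
  apply (core p); auto.
  - intros x y Hxy. apply Hp3. apply Hal. apply Hp3. auto.
  - intros x y Hxy. apply Hp3. apply Hbe. apply Hp3. auto.
  - rewrite Hp1; auto.
  - rewrite Hp1; auto.
Qed.

Lemma gen2_it (W : R -> Prop) a b h n : gen2 W a b h -> gen2 W a b (it n h).
Proof.
  intros H. induction n.
  - exact (gen2_id W a b).
  - exact (gen2_comp W a b h (it n h) H IHn).
Qed.

Theorem lemma4p1 (W : R -> Prop) (alpha beta z : Wt W -> Wt W) :
  closed_set W -> (exists x, W x) ->
  is_aut W alpha -> is_aut W beta -> is_aut W z ->
  (forall x, ~ Fix W z x) ->
  (forall x, z (alpha x) = alpha (z x)) ->
  (forall x, z (beta x) = beta (z x)) ->
  (exists x, Fix W alpha x) -> (exists x, Fix W beta x) ->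
  (forall x, Fix W alpha x -> ~ Fix W beta x) ->
  contains_nonabelian_free W (gen2 W alpha beta).
Proof.
  intros HW [w0 Hw0] [[ai [Ha1 Ha2]] Hainc] [[bi [Hb1 Hb2]] Hbinc] [[zi [Hz1 Hz2]] Hzinc]
    Hnofix Hza Hzb HA HB Hdis.
  set (o := ordW W HW).
  set (x0 := exist W w0 Hw0).
  assert (Hal : incr o alpha) by exact Hainc.
  assert (Hbe : incr o beta) by exact Hbinc.
  assert (Hz : incr o z) by exact Hzinc.
  assert (Hali : inv alpha ai) by (split; auto).
  assert (Hbei : inv beta bi) by (split; auto).
  assert (Hzi : inv z zi) by (split; auto).
  assert (Hca : comm alpha z) by (intros x; symmetry; auto).
  assert (Hcb : comm beta z) by (intros x; symmetry; auto).
  assert (HNM : exists N M, forall w, w <> nil -> reduced w ->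
    exists x, eval_word (it N alpha) (it N ai) (it M beta) (it M bi) w x <> x).
  { destruct (sign_nofix o z zi Hz Hzi Hnofix) as [Hup|Hdn].
    - apply (final_gen o z zi alpha ai beta bi x0); auto.
    - apply (final_gen o zi z alpha ai beta bi x0); auto.
      + apply (incr_inv o z); auto.
      + apply inv_sym; auto.
      + intros x. specialize (Hdn (zi x)). rewrite Hz2 in Hdn. auto.
      + apply (comm_inv2 alpha z zi); auto.
      + apply (comm_inv2 beta z zi); auto. }
  destruct HNM as [N [M HNM]].
  exists (it N alpha), (it N ai), (it M beta), (it M bi).
  split; [apply gen2_it; apply gen2_a|].
  split; [apply gen2_it; apply gen2_b|].
  destruct (it_inv alpha ai N Hali) as [H1 H2].
  destruct (it_inv beta bi M Hbei) as [H3 H4].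
  repeat split; auto.
Qed.
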